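(* Assume the setting of the context and put $\widehat{x}_-=\frac{C_1\epsilon}{2}$, $\widehat{x}_c=\frac{C_1\epsilon}{2}(e^{-2C_0}+1)$, $\widehat{x}_+=\frac{2e^{2C_0}}{C_1\epsilon}$. Then for all sufficiently small $\epsilon>0$ and every $\sigma\in\Sigma$ (writing $Q=Q^\epsilon_\sigma$, $D=D_{\kappa_\sigma}$): (i) if $x\in[0,\infty)$ then $Q\cdot(D\cdot x)\notin[0,\widehat{x}_-)$; (ii) if $x\in[\widehat{x}_-,\infty)$ then $Q\cdot(D\cdot x)\notin[0,\widehat{x}_c)$; (iii) if $Q\cdot(D\cdot x)\in[0,\infty)$ then $x\notin[\widehat{x}_+,\infty)$.
   Context: Let $(\Sigma,\mathbf{p})$ be a probability space. For each $\sigma\in\Sigma$ and $\epsilon\in[-1,1]$ let real numbers $a_\sigma,b_\sigma$, $\kappa_\sigma>0$ and $\alpha^\epsilon_\sigma,\beta^\epsilon_\sigma,\gamma^\epsilon_\sigma,\delta^\epsilon_\sigma$ be given, with $A^\epsilon_\sigma=\begin{pmatrix}\alpha^\epsilon_\sigma&\beta^\epsilon_\sigma\\ \gamma^\epsilon_\sigma&\delta^\epsilon_\sigma\end{pmatrix}$. Assume that for all $\sigma$: $|\log(\kappa_\sigma)|\le C_0$, $a_\sigma-|b_\sigma|\ge C_1$, $a_\sigma+|b_\sigma|\le C_2$, and $\|A^\epsilon_\sigma\|\le C_3$ for $|\epsilon|\le1$, with constants $C_0,C_1,C_2,C_3\in(0,\infty)$. On $\mathbb{R}\cup\{\infty\}$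 define $D_{\kappa}\cdot x=\kappa^2x$ and $$Q^\epsilon_\sigma\cdot x=\frac{(1+\epsilon^2\alpha^\epsilon_\sigma)x+(a_\sigma-b_\sigma-\epsilon\beta^\epsilon_\sigma)\epsilon}{1+\epsilon^2\delta^\epsilon_\sigma-(a_\sigma+b_\sigma+\epsilon\gamma^\epsilon_\sigma)\epsilon x}$$ (Möbius actions with the usual conventions at $\infty$). *)

(* Defs.v *)
From Stdlib Require Import Reals.
Open Scope R_scope.

Inductive RP1 : Type := Fin (r : R) | Inf.

Definition mobius (a b c d : R) (x : RP1) : RP1 :=
  match x with
  | Fin r => if Req_EM_T (c * r + d) 0 then Inf else Fin ((a * r + b) / (c * r + d))
  | Inf => if Req_EM_T c 0 then Inf else Fin (a / c)
  end.

(* D_κ · x = κ^2 x  (the Möbius action of diag(κ, 1/κ)). *)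
Definition Dact (kappa : R) (x : RP1) : RP1 :=
  match x with Fin r => Fin (kappa ^ 2 * r) | Inf => Inf end.

Definition Qact (eps a b al be ga de : R) (x : RP1) : RP1 :=
  mobius (1 + eps ^ 2 * al) ((a - b - eps * be) * eps)
         (- ((a + b + eps * ga) * eps)) (1 + eps ^ 2 * de) x.

Definition in_Ico (lo hi : R) (x : RP1) : Prop :=
  match x with Fin r => lo <= r < hi | Inf => False end.

Definition in_Ici (lo : R) (x : RP1) : Prop :=
  match x with Fin r => lo <= r | Inf => False end.

Definition mat_norm (al be ga de : R) : R :=
  sqrt (al ^ 2 + be ^ 2 + ga ^ 2 + de ^ 2).

(* Main.v *)
Require Import Defs.
From Stdlib Require Import Reals Lra Psatz.
Open Scope R_scope.

Lemma norm_bounds al be ga de C : mat_norm al be ga de <= C ->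
  Rabs al <= C /\ Rabs be <= C /\ Rabs ga <= C /\ Rabs de <= C.
Proof. unfold mat_norm. intros H.
  assert (Hs: forall x s, 0 <= s -> x^2 <= x^2 + s -> Rabs x <= sqrt (x^2+s)).
  { intros x s Hs _. rewrite <- sqrt_Rsqr_abs. apply sqrt_le_1_alt. unfold Rsqr. nra. }
  repeat split; eapply Rle_trans; try exact H.
  - replace (al ^ 2 + be ^ 2 + ga ^ 2 + de ^ 2) with (al^2 + (be ^ 2 + ga ^ 2 + de ^ 2)) by ring. apply Hs; nra.
  - replace (al ^ 2 + be ^ 2 + ga ^ 2 + de ^ 2) with (be^2 + (al ^ 2 + ga ^ 2 + de ^ 2)) by ring. apply Hs; nra.
  - replace (al ^ 2 + be ^ 2 + ga ^ 2 + de ^ 2) with (ga^2 + (be ^ 2 + al ^ 2 + de ^ 2)) by ring. apply Hs; nra.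
  - replace (al ^ 2 + be ^ 2 + ga ^ 2 + de ^ 2) with (de^2 + (be ^ 2 + ga ^ 2 + al ^ 2)) by ring. apply Hs; nra.
Qed.

Lemma absb x c : Rabs x <= c -> -c <= x <= c.
Proof. unfold Rabs; destruct Rcase_abs; lra. Qed.

Lemma bnds e A B al be ga de C1 C3 : 0 < e <= 1 -> e*C3 <= C1/8 -> e*C3 <= 1/8 ->
  Rabs al <= C3 -> Rabs be <= C3 -> Rabs ga <= C3 -> Rabs de <= C3 -> A - Rabs B >= C1 ->
  7/8 <= 1+e^2*al <= 9/8 /\ 7/8 <= 1+e^2*de <= 9/8 /\
  7*C1/8 <= A-B-e*be /\ 7*C1/8 <= A+B+e*ga.
Proof. intros He H1 H2 Ha Hb Hg Hd HA.
  apply absb in Ha; apply absb in Hb; apply absb in Hg; apply absb in Hd.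
  assert (Bb: -B <= Rabs B /\ B <= Rabs B) by (split; [rewrite <- Rabs_Ropp|]; apply Rle_abs).
  assert (e*e*C3 <= 1/8) by nra.
  repeat split; nra.
Qed.


Lemma core N Dn M lo : 0 < N -> Dn <> 0 -> Dn <= M -> 0 < lo -> lo*M <= N -> ~ (0 <= N/Dn < lo).
Proof. intros HN HD HM Hl H [H1 H2].
  destruct (Rlt_or_le Dn 0) as [Hn|Hp].
  - assert (N/Dn < 0). { unfold Rdiv. apply Rmult_pos_neg; [lra| apply Rinv_lt_0_compat; lra]. } lra.
  - assert (Dn > 0) by lra. set (r := N/Dn) in *. assert (N = r*Dn) by (unfold r; field; lra).
    nra.
Qed.

Lemma core3 N Dn : 0 < N -> Dn < 0 -> ~ (0 <= N/Dn).
Proof. intros. assert (N/Dn < 0). { unfold Rdiv. apply Rmult_pos_neg; [lra| apply Rinv_lt_0_compat; lra]. } lra. Qed.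
Theorem lemma2 (Sigma : Type)
  (a b kappa : Sigma -> R) (alpha beta gamma delta : Sigma -> R -> R)
  (C0 C1 C2 C3 : R)
  (hC0 : 0 < C0) (hC1 : 0 < C1) (hC2 : 0 < C2) (hC3 : 0 < C3)
  (hkpos : forall s, 0 < kappa s)
  (hk : forall s, Rabs (ln (kappa s)) <= C0)
  (hab1 : forall s, a s - Rabs (b s) >= C1)
  (hab2 : forall s, a s + Rabs (b s) <= C2)
  (hA : forall s eps, Rabs eps <= 1 ->
          mat_norm (alpha s eps) (beta s eps) (gamma s eps) (delta s eps) <= C3) :
  exists eps0, 0 < eps0 /\
    forall eps, 0 < eps < eps0 -> forall s : Sigma,
      let xm := C1 * eps / 2 in
      let xc := C1 * eps / 2 * (exp (- (2 * C0)) + 1) in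
      let xp := 2 * exp (2 * C0) / (C1 * eps) in
      let Q := Qact eps (a s) (b s) (alpha s eps) (beta s eps)
                        (gamma s eps) (delta s eps) in
      let D := Dact (kappa s) in
      (forall x, in_Ici 0 x -> ~ in_Ico 0 xm (Q (D x))) /\
      (forall x, in_Ici xm x -> ~ in_Ico 0 xc (Q (D x))) /\
      (forall x, in_Ici 0 (Q (D x)) -> ~ in_Ici xp x).
Proof.
  exists (Rmin 1 (Rmin (C1/(8*C3)) (1/(8*C3)))).
  split.
  { apply Rmin_pos; [lra|apply Rmin_pos; apply Rdiv_lt_0_compat; lra]. }
  intros eps [He He0] s xm xc xp Q D.
  assert (He1 : eps <= 1) by (eapply Rle_trans; [left; exact He0| apply Rmin_l]).
  assert (He2 : eps < C1/(8*C3)) by (eapply Rlt_le_trans; [exact He0| eapply Rle_trans; [apply Rmin_r| apply Rmin_l]]).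
  assert (He3 : eps < 1/(8*C3)) by (eapply Rlt_le_trans; [exact He0| eapply Rle_trans; [apply Rmin_r| apply Rmin_r]]).
  assert (Hc1 : eps*C3 <= C1/8).
  { apply Rmult_lt_compat_r with (r:=C3) in He2; [|lra]. replace (C1/(8*C3)*C3) with (C1/8) in He2 by (field; lra). lra. }
  assert (Hc2 : eps*C3 <= 1/8).
  { apply Rmult_lt_compat_r with (r:=C3) in He3; [|lra]. replace (1/(8*C3)*C3) with (1/8) in He3 by (field; lra). lra. }
  assert (Hn := hA s eps ltac:(rewrite Rabs_right; lra)).
  apply norm_bounds in Hn. destruct Hn as [Ha [Hb [Hg Hd]]].
  destruct (bnds eps (a s) (b s) _ _ _ _ C1 C3 (conj He He1) Hc1 Hc2 Ha Hb Hg Hd (hab1 s))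
    as [Hp [Hq [Hu Hv]]].
  set (E := exp (- (2 * C0))).
  assert (HE0 : 0 < E) by apply exp_pos.
  assert (HE1 : E <= 1).
  { unfold E. rewrite <- exp_0. destruct (Req_dec (-(2*C0)) 0); [rewrite H; lra|]. left; apply exp_increasing; lra. }
  set (K := kappa s ^ 2).
  assert (HKE : E <= K).
  { unfold K, E. assert (Hl := hk s). apply absb in Hl.
    assert (exp (-C0) <= kappa s).
    { rewrite <- (exp_ln (kappa s)) by apply hkpos.
      destruct (Req_dec (-C0) (ln (kappa s))) as [Heq|]; [rewrite Heq; lra|]. left; apply exp_increasing; lra. }
    replace (-(2*C0)) with (-C0 + -C0) by ring. rewrite exp_plus.
    assert (0 < exp (-C0)) by apply exp_pos. simpl. nra. }
  assert (HKx : 1 <= K * exp (2*C0)).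
  { assert (exp (-(2*C0)) * exp (2*C0) = 1) by (rewrite <- exp_plus; replace (-(2*C0) + 2*C0) with 0 by ring; apply exp_0).
    fold E in H. assert (0 < exp (2*C0)) by apply exp_pos. nra. }
  assert (HK0 : 0 < K) by lra.
  unfold Q, D, Qact, Dact.
  set (p := 1 + eps ^ 2 * alpha s eps) in *.
  set (q := 1 + eps ^ 2 * delta s eps) in *.
  set (u := a s - b s - eps * beta s eps) in *.
  set (v := a s + b s + eps * gamma s eps) in *.
  fold K.
  split; [|split].
  - intros [r|] Hr; [|contradiction]. simpl in Hr. unfold mobius.
    destruct Req_EM_T as [Hz|Hz]; [simpl; tauto|]. unfold in_Ico.
    assert (0 <= K*r) by nra.
    assert (0 <= v*eps*(K*r)) by (apply Rmult_le_pos; [apply Rmult_le_pos|]; nra).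
    assert (0 <= p*(K*r)) by (apply Rmult_le_pos; nra).
    assert (7*C1/8*eps <= u*eps) by (apply Rmult_le_compat_r; lra).
    apply core with (M := 9/8).
    + nra.
    + exact Hz.
    + lra.
    + unfold xm; nra.
    + unfold xm. assert (0 < C1*eps) by nra. nra.
  - intros [r|] Hr; [|contradiction]. simpl in Hr. unfold mobius.
    destruct Req_EM_T as [Hz|Hz]; [simpl; tauto|]. unfold in_Ico.
    unfold xm in Hr.
    assert (0 < C1*eps) by nra. assert (0 < E*(C1*eps/2)) by (apply Rmult_lt_0_compat; lra).
    assert (E * (C1*eps/2) <= K*r). { assert (0 < C1*eps) by nra. assert (0 <= (K-E)*r) by (apply Rmult_le_pos; lra). assert (0 <= E*(r - C1*eps/2)) by (apply Rmult_le_pos; lra). nra. }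
    assert (0 <= v*eps*(K*r)) by (apply Rmult_le_pos; [apply Rmult_le_pos|]; lra).
    assert (7/8*(K*r) <= p*(K*r)) by (apply Rmult_le_compat_r; nra).
    assert (7*C1/8*eps <= u*eps) by (apply Rmult_le_compat_r; lra).
    assert (0 <= C1*eps*(1-E)) by (apply Rmult_le_pos; nra).
    apply core with (M := 9/8).
    + nra.
    + exact Hz.
    + lra.
    + unfold xc; fold E; apply Rmult_lt_0_compat; lra.
    + unfold xc; fold E. lra.
  - intros [r|] Hr; [|intros []]. simpl in Hr |- *. unfold mobius in Hr.
    destruct Req_EM_T as [Hz|Hz]; [simpl in Hr; tauto|]. unfold in_Ici in Hr.
    intros Hx. unfold xp in Hx.
    assert (Hr2 : 2 * exp (2*C0) <= r * (C1*eps)).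
    { apply Rmult_le_compat_r with (r := C1*eps) in Hx; [|nra].
      replace (2 * exp (2 * C0) / (C1 * eps) * (C1 * eps)) with (2 * exp (2*C0)) in Hx by (field; lra). lra. }
    assert (Hr3 : 2 <= K*r*C1*eps) by nra.
    assert (0 < exp (2*C0)) by apply exp_pos.
    assert (Hce : 0 < C1*eps) by (apply Rmult_lt_0_compat; lra).
    assert (0 < r).
    { destruct (Rle_or_lt r 0) as [Hr0|]; [|lra].
      assert (0 <= (-r)*(C1*eps)) by (apply Rmult_le_pos; lra). lra. }
    assert (0 <= K*r) by (apply Rmult_le_pos; lra).
    assert (0 <= p*(K*r)) by (apply Rmult_le_pos; nra).
    assert (7*C1/8*eps <= u*eps) by (apply Rmult_le_compat_r; lra).
    assert (7*C1/8*(eps*(K*r)) <= v*(eps*(K*r))) by (apply Rmult_le_compat_r; nra).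
    apply (core3 (p * (K * r) + u * eps) (- (v * eps) * (K * r) + q)); [nra| |exact Hr].
    nra.
Qed.
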